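(* Let $(f,\bar f)\colon (G,P_G)\to(H,P_H)$ be a regular epimorphism in $\mathsf{PreOrdGrp}$ (i.e. both $f$ and $\bar f$ surjective). The following conditions are equivalent: (1) (a) $\mathsf{Ker}(f)\subseteq Z(G)$, and (b) $\bar f\colon P_G\to P_H$ is a special homogeneous surjection in the category $\mathsf{Mon}$ of monoids; (2) $(f,\bar f)$ is a $\Gamma$-normal extension; (3) $(f,\bar f)$ is a $\Gamma$-central extension.
   Context: A preordered group is a pair $(G,P_G)$ where $G$ is a group (written additively, not necessarily abelian) and $P_G\subseteq G$ is a submonoid closed under conjugation in $G$. A morphism $(f,\bar f)\colon (G,P_G)\to(H,P_H)$ is a group homomorphism $f$ with $f(P_G)\subseteq P_H$, $\bar f$ its restriction to positive cones; this gives the category $\mathsf{PreOrdGrp}$. Limits are computed componentwise; regular (= normal = effective descent) epimorphisms are the morphisms with $f$ and $\bar f$ both surjective. Let $\mathsf{Mono(Ab)}$ denote the full subcategory of preordered groups $(G,P_G)$ with $G$ abelian and $P_G$ a subgroup. The inclusion $U\colon\mathsf{Mono(Ab)}\to\mathsf{PreOrdGrp}$ has a left adjoint $F$ with $F(G,P_G)=(G/[G,G],\ \{x-y : x,y\in\eta_G(P_G)\})$, where $\eta_G\colon G\to G/[G,G]$ is the abelianization quotient (the second component is the group completion of the monoid $\eta_G(P_G)$), and unit component $(G,P_G)\to UF(G,P_G)$ given by $\eta_G$. The Galois structure $\Gamma$ uses as extensions the regular epimorphisms. A regular epimorphism $(f,\bar f)\colon X\to Y$ is a $\Gamma$-trivial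 extension if the square formed by $(f,\bar f)$, the unit components $X\to UF(X)$, $Y\to UF(Y)$ and $UF(f,\bar f)$ is a pullback in $\mathsf{PreOrdGrp}$; it is a $\Gamma$-central extension if there is a regular epimorphism $p\colon E\to Y$ such that the pullback of $(f,\bar f)$ along $p$ is a $\Gamma$-trivial extension; it is a $\Gamma$-normal extension if the first projection of its kernel pair is a $\Gamma$-trivial extension. A split epimorphism of monoids $f\colon X\to Y$ with section $s$ and kernel $K=f^{-1}(0)$ is homogeneous if for every $y\in Y$ the maps $K\to f^{-1}(y)$, $x\mapsto x+s(y)$ and $x\mapsto s(y)+x$, are bijections. A surjective monoid homomorphism $f\colon X\to Y$ is a special homogeneous surjection if the first projection $\pi_1\colon Eq(f)\to X$ of its kernel pair $Eq(f)=\{(x,x')\in X\times X : f(x)=f(x')\}$, with section the diagonal $x\mapsto(x,x)$, is a homogeneous split epimorphism. *)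

(* Defs.v *)
From Stdlib Require Import ClassicalEpsilon ProofIrrelevance.

Set Implicit Arguments.
Unset Strict Implicit.

Record pgrp := PGrp {
  pcar :> Type;
  padd : pcar -> pcar -> pcar;
  popp : pcar -> pcar;
  pzero : pcar;
  ppos : pcar -> Prop
}.
Arguments padd {p} _ _.
Arguments popp {p} _.
Arguments pzero {p}.
Arguments ppos {p} _.

Record is_pgrp (G : pgrp) : Prop := {
  ax_assoc : forall x y z : G, padd x (padd y z) = padd (padd x y) z;
  ax_add0l : forall x : G, padd pzero x = x;
  ax_add0r : forall x : G, padd x pzero = x;
  ax_addNl : forall x : G, padd (popp x) x = pzero;
  ax_addNr : forall x : G, padd x (popp x) = pzero;
  ax_pos0 : ppos (@pzero G);
  ax_posD : forall x y : G, ppos x -> ppos y -> ppos (padd x y);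
  ax_posJ : forall g x : G, ppos x -> ppos (padd (padd g x) (popp g))
}.

Record phom (G H : pgrp) := PHom {
  pfun :> G -> H;
  hom_add : forall x y, pfun (padd x y) = padd (pfun x) (pfun y);
  hom_opp : forall x, pfun (popp x) = popp (pfun x);
  hom_zero : pfun pzero = pzero;
  hom_pos : forall x, ppos x -> ppos (pfun x)
}.

Definition regular_epi (G H : pgrp) (f : phom G H) : Prop :=
  (forall y : H, exists x : G, f x = y) /\
  (forall y : H, ppos y -> exists x : G, ppos x /\ f x = y).

(* A commutative square
        A --a--> C
        |        |
        b        d
        v        v
        B --c--> D
   is a pullback in PreOrdGrp (universal property). *)
Definition is_pullback (A B C D : pgrp) (a : A -> C) (b : A -> B)
    (c : B -> D) (d : C -> D) : Prop :=
  (forall x : A, c (b x) = d (a x)) /\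
  forall (Z : pgrp), is_pgrp Z ->
  forall (u : phom Z B) (v : phom Z C), (forall z, c (u z) = d (v z)) ->
  exists w : phom Z A,
    (forall z, b (w z) = u z /\ a (w z) = v z) /\
    (forall w' : phom Z A, (forall z, b (w' z) = u z /\ a (w' z) = v z) ->
       forall z, w' z = w z).

Section Abelianization.
Variable G : pgrp.

Inductive comm_sub : G -> Prop :=
  | cs_zero : comm_sub pzero
  | cs_comm : forall x y : G,
      comm_sub (padd (padd (padd x y) (popp x)) (popp y))
  | cs_add : forall a b, comm_sub a -> comm_sub b -> comm_sub (padd a b)
  | cs_opp : forall a, comm_sub a -> comm_sub (popp a).

Definition abcls (g : G) : G -> Prop := fun x => comm_sub (padd g (popp x)).

Definition abT : Type := {S : G -> Prop | exists g, S = abcls g}.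

Definition ab_eta (g : G) : abT := exist _ (abcls g) (ex_intro _ g eq_refl).

Definition ab_rep (c : abT) : G :=
  proj1_sig (constructive_indefinite_description _ (proj2_sig c)).

Definition ab_add (c d : abT) : abT := ab_eta (padd (ab_rep c) (ab_rep d)).
Definition ab_opp (c : abT) : abT := ab_eta (popp (ab_rep c)).
Definition ab_zero : abT := ab_eta pzero.

(* positive cone of F(G,P_G): the group completion {x - y : x,y in eta(P_G)} *)
Definition ab_pos (c : abT) : Prop :=
  exists x y : G, ppos x /\ ppos y /\ c = ab_add (ab_eta x) (ab_opp (ab_eta y)).

Definition UF : pgrp := PGrp ab_add ab_opp ab_zero ab_pos.

End Abelianization.

Definition UF_map (G H : pgrp) (f : G -> H) : UF G -> UF H :=
  fun c => ab_eta (f (ab_rep c)).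

Definition trivial_ext (X Y : pgrp) (f : phom X Y) : Prop :=
  regular_epi f /\
  is_pullback (A := X) (B := Y) (C := UF X) (D := UF Y)
    (@ab_eta X) f (@ab_eta Y) (UF_map f).

Section PB.
Variables (E X Y : pgrp) (p : phom E Y) (f : phom X Y).

Definition pbT : Type := {q : E * X | p (fst q) = f (snd q)}.

Definition pb_add (q r : pbT) : pbT.
Proof.
  refine (exist _ (padd (fst (proj1_sig q)) (fst (proj1_sig r)),
                   padd (snd (proj1_sig q)) (snd (proj1_sig r))) _).
  simpl. rewrite (hom_add p), (hom_add f), (proj2_sig q), (proj2_sig r).
  reflexivity.
Defined.

Definition pb_opp (q : pbT) : pbT.
Proof.
  refine (exist _ (popp (fst (proj1_sig q)), popp (snd (proj1_sig q))) _).
  simpl. rewrite (hom_opp p), (hom_opp f), (proj2_sig q). reflexivity.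
Defined.

Definition pb_zero : pbT.
Proof.
  refine (exist _ (pzero, pzero) _). simpl.
  rewrite (hom_zero p), (hom_zero f). reflexivity.
Defined.

Definition pb_pos (q : pbT) : Prop :=
  ppos (fst (proj1_sig q)) /\ ppos (snd (proj1_sig q)).

Definition PB : pgrp := PGrp pb_add pb_opp pb_zero pb_pos.

(* the projection E x_Y X -> E : the pullback of f along p *)
Definition pb_proj1 : phom PB E.
Proof.
  refine (@PHom PB E (fun q => fst (proj1_sig q)) _ _ _ _);
    try reflexivity.
  intros q [Hq _]; exact Hq.
Defined.

End PB.

Definition kernel_pair (X Y : pgrp) (f : phom X Y) : pgrp := PB f f.
Definition kp_proj1 (X Y : pgrp) (f : phom X Y) : phom (kernel_pair f) X :=
  pb_proj1 f f.

Definition central_ext (X Y : pgrp) (f : phom X Y) : Prop :=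
  regular_epi f /\
  exists (E : pgrp) (p : phom E Y),
    is_pgrp E /\ regular_epi p /\ trivial_ext (pb_proj1 p f).

Definition normal_ext (X Y : pgrp) (f : phom X Y) : Prop :=
  regular_epi f /\ trivial_ext (kp_proj1 f).

Record mon := Mon { mcar :> Type; mop : mcar -> mcar -> mcar; munit : mcar }.
Arguments mop {m} _ _.
Arguments munit {m}.

Record mhom (M N : mon) := MHom {
  mfun :> M -> N;
  mhom_op : forall x y, mfun (mop x y) = mop (mfun x) (mfun y);
  mhom_unit : mfun munit = munit
}.

Definition set_bij (T : Type) (A B : T -> Prop) (g : T -> T) : Prop :=
  (forall a, A a -> B (g a)) /\
  (forall a a', A a -> A a' -> g a = g a' -> a = a') /\
  (forall b, B b -> exists a, A a /\ g a = b).

Definition homogeneous_split_epi (X Y : mon) (f : mhom X Y) (s : mhom Y X)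
  : Prop :=
  (forall y, f (s y) = y) /\
  forall y : Y,
    set_bij (fun x => f x = munit) (fun x => f x = y) (fun x => mop x (s y)) /\
    set_bij (fun x => f x = munit) (fun x => f x = y) (fun x => mop (s y) x).

Section KerPairMon.
Variables (X Y : mon) (f : mhom X Y).

Definition eqmT : Type := {q : X * X | f (fst q) = f (snd q)}.

Definition eqm_op (q r : eqmT) : eqmT.
Proof.
  refine (exist _ (mop (fst (proj1_sig q)) (fst (proj1_sig r)),
                   mop (snd (proj1_sig q)) (snd (proj1_sig r))) _).
  simpl. rewrite !(mhom_op f), (proj2_sig q), (proj2_sig r). reflexivity.
Defined.

Definition eqm_unit : eqmT := exist _ (munit, munit) eq_refl.

Definition EqM : mon := Mon eqm_op eqm_unit.

Definition eqm_pi1 : mhom EqM X.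
Proof. refine (@MHom EqM X (fun q => fst (proj1_sig q)) _ _); reflexivity. Defined.

Definition eqm_diag : mhom X EqM.
Proof.
  refine (@MHom X EqM (fun x => exist _ (x, x) eq_refl) _ _).
  - intros x y. simpl. unfold eqm_op. simpl. f_equal. apply proof_irrelevance.
  - simpl. unfold eqm_unit. reflexivity.
Defined.

End KerPairMon.

Definition special_homogeneous_surjection (X Y : mon) (f : mhom X Y) : Prop :=
  (forall y : Y, exists x : X, f x = y) /\
  homogeneous_split_epi (eqm_pi1 f) (eqm_diag f).

(* The positive cone P_G as a monoid, and the restriction f-bar. *)
Definition cone (G : pgrp) (HG : is_pgrp G) : mon :=
  @Mon {x : G | ppos x}
    (fun a b => exist _ (padd (proj1_sig a) (proj1_sig b))
                  (ax_posD HG (proj2_sig a) (proj2_sig b)))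
    (exist _ pzero (ax_pos0 HG)).

Definition cone_hom (G H : pgrp) (HG : is_pgrp G) (HH : is_pgrp H)
  (f : phom G H) : mhom (cone HG) (cone HH).
Proof.
  refine (@MHom (cone HG) (cone HH)
            (fun a => exist _ (f (proj1_sig a)) (hom_pos f (proj2_sig a))) _ _).
  - intros [x hx] [y hy]; simpl.
    apply eq_sig_hprop; [intros; apply proof_irrelevance|]. simpl.
    apply hom_add.
  - apply eq_sig_hprop; [intros; apply proof_irrelevance|]. simpl.
    apply hom_zero.
Defined.

(* Main.v *)
Require Import Defs.
From Stdlib Require Import ClassicalEpsilon ProofIrrelevance FunctionalExtensionality PropExtensionality.
Set Implicit Arguments.
Unset Strict Implicit.

Lemma g_addKl (G : pgrp) (HG : is_pgrp G) (x y : G) : padd (popp x) (padd x y) = y.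
Proof. rewrite (ax_assoc HG), (ax_addNl HG), (ax_add0l HG); reflexivity. Qed.
Lemma g_addNKl (G : pgrp) (HG : is_pgrp G) (x y : G) : padd x (padd (popp x) y) = y.
Proof. rewrite (ax_assoc HG), (ax_addNr HG), (ax_add0l HG); reflexivity. Qed.
Lemma g_oppK (G : pgrp) (HG : is_pgrp G) (x : G) : popp (popp x) = x.
Proof.
  rewrite <- (ax_add0r HG (popp (popp x))), <- (ax_addNl HG x), (ax_assoc HG),
    (ax_addNl HG), (ax_add0l HG). reflexivity.
Qed.
Lemma g_inv_uniq (G : pgrp) (HG : is_pgrp G) (x y : G) : padd x y = pzero -> popp x = y.
Proof.
  intro H. rewrite <- (ax_add0r HG (popp x)), <- H, (g_addKl HG). reflexivity.
Qed.
Lemma g_oppD (G : pgrp) (HG : is_pgrp G) (x y : G) : popp (padd x y) = padd (popp y) (popp x).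
Proof.
  apply (g_inv_uniq HG). rewrite <- (ax_assoc HG), (g_addNKl HG), (ax_addNr HG). reflexivity.
Qed.
Lemma g_opp0 (G : pgrp) (HG : is_pgrp G) : popp (@pzero G) = pzero.
Proof. apply (g_inv_uniq HG). apply (ax_add0l HG). Qed.

Ltac gsimpl HG :=
  repeat first
   [ rewrite <- (ax_assoc HG)
   | rewrite (ax_add0l HG) | rewrite (ax_add0r HG)
   | rewrite (g_addKl HG) | rewrite (g_addNKl HG)
   | rewrite (ax_addNr HG) | rewrite (ax_addNl HG)
   | rewrite (g_oppD HG) | rewrite (g_oppK HG) | rewrite (g_opp0 HG) ].

Ltac gsimplin HG H :=
  repeat first
   [ rewrite <- (ax_assoc HG) in H
   | rewrite (ax_add0l HG) in H | rewrite (ax_add0r HG) in H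
   | rewrite (g_addKl HG) in H | rewrite (g_addNKl HG) in H
   | rewrite (ax_addNr HG) in H | rewrite (ax_addNl HG) in H
   | rewrite (g_oppD HG) in H | rewrite (g_oppK HG) in H | rewrite (g_opp0 HG) in H ].

Lemma g_sub0 (G : pgrp) (HG : is_pgrp G) (x y : G) : padd x (popp y) = pzero -> x = y.
Proof.
  intro H. assert (E : padd (padd x (popp y)) y = padd pzero y) by (rewrite H; reflexivity).
  gsimplin HG E. exact E.
Qed.

Lemma g_cancel_r (G : pgrp) (HG : is_pgrp G) (x y z : G) : padd x z = padd y z -> x = y.
Proof.
  intro H. assert (E : padd (padd x z) (popp z) = padd (padd y z) (popp z)) by (rewrite H; reflexivity).
  gsimplin HG E. exact E.
Qed.
Lemma g_cancel_l (G : pgrp) (HG : is_pgrp G) (x y z : G) : padd z x = padd z y -> x = y.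
Proof.
  intro H. assert (E : padd (popp z) (padd z x) = padd (popp z) (padd z y)) by (rewrite H; reflexivity).
  gsimplin HG E. exact E.
Qed.

Lemma hom_sub (G H : pgrp) (f : phom G H) (x y : G) : f (padd x (popp y)) = padd (f x) (popp (f y)).
Proof. rewrite hom_add, hom_opp. reflexivity. Qed.

Lemma cs_eq (G : pgrp) (a b : G) : comm_sub a -> a = b -> comm_sub b.
Proof. intros H E; subst; exact H. Qed.

Lemma cs_conj (G : pgrp) (HG : is_pgrp G) (g c : G) : comm_sub c -> comm_sub (padd g (padd c (popp g))).
Proof.
  intro Hc. apply (cs_eq (cs_add (cs_comm g c) Hc)). gsimpl HG. reflexivity.
Qed.

Lemma cs_swap (G : pgrp) (HG : is_pgrp G) (a b : G) : comm_sub (padd (padd a b) (popp (padd b a))).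
Proof. apply (cs_eq (cs_comm a b)). gsimpl HG. reflexivity. Qed.

Lemma eta_eq (G : pgrp) (HG : is_pgrp G) (x y : G) : comm_sub (padd x (popp y)) -> ab_eta x = ab_eta y.
Proof.
  intro H. unfold ab_eta. apply eq_sig_hprop; [intros; apply proof_irrelevance|]. simpl.
  apply functional_extensionality. intro z. unfold abcls. apply propositional_extensionality. split; intro K.
  - apply (cs_eq (cs_add (cs_opp H) K)). gsimpl HG. reflexivity.
  - apply (cs_eq (cs_add H K)). gsimpl HG. reflexivity.
Qed.

Lemma eta_eq_inv (G : pgrp) (HG : is_pgrp G) (x y : G) : ab_eta x = ab_eta y -> comm_sub (padd x (popp y)).
Proof.
  intro H. apply (f_equal (@proj1_sig _ _)) in H. simpl in H.
  change (abcls x y). rewrite H. unfold abcls. rewrite (ax_addNr HG). constructor.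
Qed.

Lemma eta_rep (G : pgrp) (c : abT G) : ab_eta (ab_rep c) = c.
Proof.
  unfold ab_rep. destruct (constructive_indefinite_description _ _) as [g Hg]. simpl.
  apply eq_sig_hprop; [intros; apply proof_irrelevance|]. simpl. symmetry; exact Hg.
Qed.

Lemma eta_compat_add (G : pgrp) (HG : is_pgrp G) (r s a b : G) :
  ab_eta r = ab_eta a -> ab_eta s = ab_eta b -> ab_eta (padd r s) = ab_eta (padd a b).
Proof.
  intros H1 H2. apply eta_eq_inv in H1, H2; auto. apply (eta_eq HG).
  apply (cs_eq (cs_add (cs_conj HG r H2) H1)). gsimpl HG. reflexivity.
Qed.

Lemma eta_compat_opp (G : pgrp) (HG : is_pgrp G) (r a : G) :
  ab_eta r = ab_eta a -> ab_eta (popp r) = ab_eta (popp a).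
Proof.
  intros H1. apply eta_eq_inv in H1; auto. apply (eta_eq HG).
  apply (cs_eq (cs_conj HG (popp r) (cs_opp H1))). gsimpl HG. reflexivity.
Qed.

Lemma eta_add (G : pgrp) (HG : is_pgrp G) (a b : G) :
  ab_add (ab_eta a) (ab_eta b) = ab_eta (padd a b).
Proof. unfold ab_add. apply (eta_compat_add HG); apply eta_rep. Qed.

Lemma eta_opp (G : pgrp) (HG : is_pgrp G) (a : G) :
  ab_opp (ab_eta a) = ab_eta (popp a).
Proof. unfold ab_opp. apply (eta_compat_opp HG); apply eta_rep. Qed.

Lemma eta_swap (G : pgrp) (HG : is_pgrp G) (a b : G) : ab_eta (padd a b) = ab_eta (padd b a).
Proof. apply (eta_eq HG). apply cs_swap; auto. Qed.

Lemma hom_cs (G H : pgrp) (f : phom G H) (c : G) : comm_sub c -> comm_sub (f c).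
Proof.
  induction 1.
  - rewrite hom_zero. constructor.
  - rewrite !hom_add, !hom_opp. constructor.
  - rewrite hom_add. constructor; auto.
  - rewrite hom_opp. constructor; auto.
Qed.

Lemma UF_map_eta (G H : pgrp) (HG : is_pgrp G) (HH : is_pgrp H) (f : phom G H) (x : G) :
  UF_map f (ab_eta x) = ab_eta (f x).
Proof.
  unfold UF_map. apply (eta_eq HH). rewrite <- hom_sub. apply hom_cs.
  apply (eta_eq_inv HG). apply eta_rep.
Qed.

Lemma cs_lift (G H : pgrp) (f : phom G H) (Hs : forall y : H, exists x, f x = y) (c : H) :
  comm_sub c -> exists d, comm_sub d /\ f d = c.
Proof.
  induction 1.
  - exists pzero. split; [constructor| apply hom_zero].
  - destruct (Hs x) as [a <-]. destruct (Hs y) as [b <-].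
    exists (padd (padd (padd a b) (popp a)) (popp b)). split; [constructor|].
    rewrite !hom_add, !hom_opp. reflexivity.
  - destruct IHcomm_sub1 as [d1 [H1 <-]]. destruct IHcomm_sub2 as [d2 [H2 <-]].
    exists (padd d1 d2). split; [constructor; auto| apply hom_add].
  - destruct IHcomm_sub as [d1 [H1 <-]]. exists (popp d1). split; [constructor; auto| apply hom_opp].
Qed.



Definition subP (X : pgrp) (S : X -> Prop) (H0 : S pzero)
  (Ha : forall x y, S x -> S y -> S (padd x y)) (Ho : forall x, S x -> S (popp x)) : pgrp :=
  @PGrp {x | S x} (fun a b => exist _ _ (Ha _ _ (proj2_sig a) (proj2_sig b)))
    (fun a => exist _ _ (Ho _ (proj2_sig a))) (exist _ _ H0) (fun a => proj1_sig a = pzero).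

Definition sub_incl (X : pgrp) (HX : is_pgrp X) S H0 Ha Ho : phom (@subP X S H0 Ha Ho) X.
Proof.
  refine (@PHom (subP H0 Ha Ho) X (fun a => proj1_sig a) _ _ _ _); try reflexivity.
  intros a Ha'. simpl in Ha'. rewrite Ha'. apply HX.
Defined.

Lemma is_pgrp_subP (X : pgrp) (HX : is_pgrp X) S H0 Ha Ho : is_pgrp (@subP X S H0 Ha Ho).
Proof.
  constructor; simpl; intros;
   repeat match goal with a : {x | S x} |- _ => destruct a end;
   try (apply eq_sig_hprop; [intros; apply proof_irrelevance|]); simpl in *;
   repeat match goal with E : _ = pzero |- _ => rewrite E end; gsimpl HX; auto.
Qed.

Definition recone (X : pgrp) (P : X -> Prop) : pgrp := PGrp (@padd X) (@popp X) pzero P.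

Lemma is_pgrp_recone (X : pgrp) (HX : is_pgrp X) (P : X -> Prop) :
  P pzero -> (forall x y, P x -> P y -> P (padd x y)) ->
  (forall g x, P x -> P (padd (padd g x) (popp g))) -> is_pgrp (recone P).
Proof.
  intros. constructor; simpl; auto; apply HX.
Qed.

Definition zero_phom (Z W : pgrp) (h1 : padd (@pzero W) pzero = pzero) (h2 : popp (@pzero W) = pzero)
  (h3 : ppos (@pzero W)) : phom Z W.
Proof.
  refine (@PHom Z W (fun _ => pzero) _ _ _ _); intros; auto.
Defined.

Lemma ab_pos_iff (X : pgrp) (HX : is_pgrp X) (c : UF X) :
  ab_pos c <-> exists p q : X, ppos p /\ ppos q /\ c = ab_eta (padd p (popp q)).
Proof.
  unfold ab_pos. split; intros [p [q [Hp [Hq E]]]]; exists p, q; repeat split; auto;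
   rewrite E, (eta_opp HX), (eta_add HX); reflexivity.
Qed.

Lemma abpos0 (X : pgrp) (HX : is_pgrp X) : ab_pos (ab_eta (@pzero X)).
Proof.
  apply ab_pos_iff; auto. exists pzero, pzero. repeat split; try apply HX.
  gsimpl HX. reflexivity.
Qed.

Lemma abpos_add (X : pgrp) (HX : is_pgrp X) (x y : X) :
  ab_pos (ab_eta x) -> ab_pos (ab_eta y) -> ab_pos (ab_eta (padd x y)).
Proof.
  intros H1 H2. apply ab_pos_iff in H1, H2; auto. apply ab_pos_iff; auto.
  destruct H1 as [p [q [Hp [Hq E1]]]]. destruct H2 as [p' [q' [Hp' [Hq' E2]]]].
  exists (padd p p'), (padd q q'). repeat split; try (apply HX; auto).
  rewrite <- (eta_add HX), E1, E2, (eta_add HX).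
  transitivity (ab_eta (padd p (padd (padd p' (popp q')) (popp q)))).
  - gsimpl HX. apply (eta_compat_add HX); [reflexivity|]. rewrite (eta_swap HX). gsimpl HX. reflexivity.
  - gsimpl HX. reflexivity.
Qed.

Lemma abpos_conj (X : pgrp) (HX : is_pgrp X) (g x : X) :
  ab_pos (ab_eta x) -> ab_pos (ab_eta (padd (padd g x) (popp g))).
Proof.
  intro H. rewrite (eta_swap HX). gsimpl HX. exact H.
Qed.

Definition T1 (X Y : pgrp) (f : phom X Y) : Prop :=
  forall x, f x = pzero -> ab_eta x = ab_eta pzero -> x = pzero.
Definition T2 (X Y : pgrp) (f : phom X Y) : Prop :=
  forall x, ppos (f x) -> ab_pos (ab_eta x) -> ppos x.

Lemma inj_T1 (X Y : pgrp) (HX : is_pgrp X) (HY : is_pgrp Y) (f : phom X Y) :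
  T1 f -> forall x x', f x = f x' -> ab_eta x = ab_eta x' -> x = x'.
Proof.
  intros HT x x' E1 E2. apply (g_sub0 HX). apply HT.
  - rewrite hom_sub, E1. apply HY.
  - apply (eta_eq HX). apply eta_eq_inv in E2; auto. apply (cs_eq E2). gsimpl HX. reflexivity.
Qed.

Lemma triv_T1 (X Y : pgrp) (HX : is_pgrp X) (HY : is_pgrp Y) (f : phom X Y) :
  trivial_ext f -> T1 f.
Proof.
  intros [_ [_ PB]] x Hx1 Hx2.
  set (S := fun x : X => f x = pzero /\ ab_eta x = ab_eta pzero).
  assert (S0 : S pzero) by (split; [apply hom_zero|reflexivity]).
  assert (Sa : forall x y, S x -> S y -> S (padd x y)).
  { intros a b [A1 A2] [B1 B2]. split.
    - rewrite hom_add, A1, B1. apply HY.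
    - rewrite <- (eta_add HX), A2, B2, (eta_add HX), (ax_add0l HX). reflexivity. }
  assert (So : forall x, S x -> S (popp x)).
  { intros a [A1 A2]. split.
    - rewrite hom_opp, A1. apply (g_opp0 HY).
    - rewrite <- (eta_opp HX), A2, (eta_opp HX), (g_opp0 HX). reflexivity. }
  set (Z := subP S0 Sa So).
  assert (HZ : is_pgrp Z) by apply is_pgrp_subP, HX.
  assert (hU1 : padd (@pzero (UF X)) pzero = pzero).
  { simpl. unfold ab_zero. rewrite (eta_add HX), (ax_add0l HX). reflexivity. }
  assert (hU2 : popp (@pzero (UF X)) = pzero).
  { simpl. unfold ab_zero. rewrite (eta_opp HX), (g_opp0 HX). reflexivity. }
  assert (hU3 : ppos (@pzero (UF X))) by (apply abpos0; auto).
  set (u := zero_phom Z (ax_add0l HY pzero) (g_opp0 HY) (ax_pos0 HY)).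
  set (v := zero_phom Z hU1 hU2 hU3).
  set (w0 := zero_phom Z (ax_add0l HX pzero) (g_opp0 HX) (ax_pos0 HX)).
  destruct (PB Z HZ u v) as [w [_ Hw]].
  { intros z. simpl. unfold ab_zero. rewrite (UF_map_eta HX HY), hom_zero. reflexivity. }
  assert (E1 := Hw w0 (fun z => conj (hom_zero f) eq_refl) (exist _ x (conj Hx1 Hx2))).
  assert (E2 := Hw (sub_incl HX S0 Sa So) (fun z => conj (proj1 (proj2_sig z)) (proj2 (proj2_sig z))) (exist _ x (conj Hx1 Hx2))).
  simpl in E1, E2. rewrite E2, <- E1. reflexivity.
Qed.

Lemma triv_T2 (X Y : pgrp) (HX : is_pgrp X) (HY : is_pgrp Y) (f : phom X Y) :
  trivial_ext f -> T2 f.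
Proof.
  intros Ht. assert (HT1 := triv_T1 HX HY Ht). destruct Ht as [_ [_ PB]]. intros x Hx1 Hx2.
  set (P := fun x : X => ppos (f x) /\ ab_pos (ab_eta x)).
  assert (HZ : is_pgrp (recone P)).
  { apply is_pgrp_recone; [exact HX| | |].
    - split; [rewrite hom_zero; apply HY| apply abpos0; auto].
    - intros a b [A1 A2] [B1 B2]. split; [rewrite hom_add; apply HY; auto| apply abpos_add; auto].
    - intros g a [A1 A2]. split; [rewrite !hom_add, hom_opp; apply (ax_posJ HY); auto| apply abpos_conj; auto]. }
  set (Z := recone P) in *.
  set (u := @PHom Z Y (fun x => f x) (hom_add f) (hom_opp f) (hom_zero f) (fun a A => proj1 A)).
  set (v := @PHom Z (UF X) (fun x => @ab_eta X x) (fun x y => eq_sym (eta_add HX x y))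
     (fun x => eq_sym (eta_opp HX x)) eq_refl (fun a A => proj2 A)).
  destruct (PB Z HZ u v) as [w [Hw _]].
  { intros z. simpl. rewrite (UF_map_eta HX HY). reflexivity. }
  destruct (Hw x) as [W1 W2]. simpl in W1, W2.
  assert (E : w x = x) by (apply (inj_T1 HX HY HT1); auto).
  rewrite <- E. apply hom_pos. simpl. split; auto.
Qed.



Lemma triv_of (X Y : pgrp) (HX : is_pgrp X) (HY : is_pgrp Y) (f : phom X Y) :
  regular_epi f -> T1 f -> T2 f -> trivial_ext f.
Proof.
  intros Hr HT1 HT2. split; [exact Hr|]. split.
  { intros x. simpl. rewrite (UF_map_eta HX HY). reflexivity. }
  intros Z HZ u v Huv.
  assert (ex : forall z, exists x, f x = u z /\ ab_eta x = v z).
  { intros z. set (x0 := ab_rep (v z)).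
    assert (E0 : ab_eta x0 = v z) by apply eta_rep.
    assert (E1 := Huv z). unfold UF_map in E1. fold x0 in E1.
    apply (eta_eq_inv HY) in E1.
    destruct (cs_lift (proj1 Hr) E1) as [c [Hc Ec]].
    exists (padd c x0). split.
    - rewrite hom_add, Ec. gsimpl HY. reflexivity.
    - rewrite <- E0. apply (eta_eq HX). apply (cs_eq Hc). gsimpl HX. reflexivity. }
  set (wf := fun z => proj1_sig (constructive_indefinite_description _ (ex z))).
  assert (Hw : forall z, f (wf z) = u z /\ ab_eta (wf z) = v z)
    by (intro z; exact (proj2_sig (constructive_indefinite_description _ (ex z)))).
  assert (U := inj_T1 HX HY HT1).
  unshelve eexists (@PHom Z X wf _ _ _ _).
  - intros x y. apply U.
    + rewrite (proj1 (Hw _)), !hom_add, (proj1 (Hw _)), (proj1 (Hw _)). reflexivity.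
    + rewrite (proj2 (Hw _)), <- (eta_add HX), (proj2 (Hw _)), (proj2 (Hw _)).
      apply (hom_add v).
  - intros x. apply U.
    + rewrite (proj1 (Hw _)), !hom_opp, (proj1 (Hw _)). reflexivity.
    + rewrite (proj2 (Hw _)), <- (eta_opp HX), (proj2 (Hw _)). apply (hom_opp v).
  - apply U.
    + rewrite (proj1 (Hw _)), !hom_zero. reflexivity.
    + rewrite (proj2 (Hw _)), (hom_zero v). reflexivity.
  - intros x Hx. apply HT2.
    + rewrite (proj1 (Hw _)). apply hom_pos; auto.
    + rewrite (proj2 (Hw _)). apply (hom_pos v); auto.
  - simpl. split; [exact Hw|].
    intros w' Hw' z. apply U.
    + rewrite (proj1 (Hw' z)), (proj1 (Hw z)). reflexivity.
    + rewrite (proj2 (Hw' z)), (proj2 (Hw z)). reflexivity.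
Qed.

Lemma is_pgrp_PB (E X Y : pgrp) (HE : is_pgrp E) (HX : is_pgrp X) (p : phom E Y) (f : phom X Y) :
  is_pgrp (PB p f).
Proof.
  constructor; simpl; intros;
   repeat match goal with q : pbT _ _ |- _ => destruct q as [[? ?] ?] end;
   try (apply eq_sig_hprop; [intros; apply proof_irrelevance|]); simpl;
   unfold pb_pos in *; simpl in *;
   repeat match goal with H : _ /\ _ |- _ => destruct H end.
  1-5: f_equal; first [gsimpl HE; reflexivity | gsimpl HX; reflexivity].
  - split; [apply (ax_pos0 HE)| apply (ax_pos0 HX)].
  - split; [apply (ax_posD HE)| apply (ax_posD HX)]; auto.
  - split; [apply (ax_posJ HE)| apply (ax_posJ HX)]; auto.
Qed.



Definition Kcentral (G H : pgrp) (f : phom G H) : Prop :=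
  forall k : G, f k = pzero -> forall g : G, padd k g = padd g k.
Definition Hprime (G H : pgrp) (f : phom G H) : Prop :=
  forall a a' : G, ppos a -> ppos a' -> f a = f a' -> ppos (padd (popp a) a').

Lemma central_L4 (G H : pgrp) (HG : is_pgrp G) (HH : is_pgrp H) (f : phom G H) :
  central_ext f -> Kcentral f /\ Hprime f.
Proof.
  intros [Hf [E [p [HE [Hp Ht]]]]].
  assert (HPB := is_pgrp_PB HE HG p f).
  assert (T1' := triv_T1 HPB HE Ht). assert (T2' := triv_T2 HPB HE Ht).
  split.
  - intros k Hk g. destruct (proj1 Hp (f g)) as [e He].
    assert (h1 : p pzero = f k) by (rewrite hom_zero, Hk; reflexivity).
    set (z1 := exist (fun q : E * G => p (fst q) = f (snd q)) (pzero, k) h1 : PB p f).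
    set (z2 := exist (fun q : E * G => p (fst q) = f (snd q)) (e, g) He : PB p f).
    assert (C := T1' (padd (padd (padd z1 z2) (popp z1)) (popp z2))).
    apply (f_equal (fun q : PB p f => snd (proj1_sig q))) in C.
    + simpl in C. apply (g_sub0 HG) in C.
      assert (C' : padd (padd (padd k g) (popp k)) k = padd g k) by (rewrite C; reflexivity).
      gsimplin HG C'. exact C'.
    + simpl. gsimpl HE. reflexivity.
    + apply (eta_eq HPB). apply (cs_eq (cs_comm z1 z2)). gsimpl HPB. reflexivity.
  - intros a a' Ha Ha' Eff.
    destruct (proj2 Hp (f a) (hom_pos f Ha)) as [e [He Epe]].
    assert (Epe' : p e = f a') by (rewrite Epe; exact Eff).
    set (z := exist (fun q : E * G => p (fst q) = f (snd q)) (e, a) Epe : PB p f).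
    set (z' := exist (fun q : E * G => p (fst q) = f (snd q)) (e, a') Epe' : PB p f).
    assert (C := T2' (padd (popp z) z')).
    simpl in C. unfold pb_pos in C. simpl in C. apply C.
    + rewrite (ax_addNl HE). apply HE.
    + apply (ab_pos_iff HPB). exists z', z. repeat split; simpl; auto.
      apply (eta_swap HPB).
Qed.

Lemma conj_same (G H : pgrp) (HG : is_pgrp G) (HH : is_pgrp H) (f : phom G H) :
  Kcentral f -> forall a a' g : G, f a = f a' ->
  padd a' (padd g (popp a')) = padd a (padd g (popp a)).
Proof.
  intros Kc a a' g E.
  set (k := padd (popp a) a').
  assert (Hk : forall h, padd k h = padd h k).
  { apply Kc. unfold k. rewrite hom_add, hom_opp, E. apply HH. }
  assert (Ea : a' = padd a k) by (unfold k; gsimpl HG; reflexivity).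
  clearbody k. subst a'. gsimpl HG.
  rewrite (Hk (padd g (padd (popp k) (popp a)))). gsimpl HG.
  rewrite <- (Hk (popp a)). gsimpl HG. reflexivity.
Qed.

Lemma kp_inv (G H : pgrp) (HG : is_pgrp G) (HH : is_pgrp H) (f : phom G H) :
  Kcentral f -> forall c : PB f f, comm_sub c -> fst (proj1_sig c) = snd (proj1_sig c).
Proof.
  intros Kc c Hc. induction Hc.
  - reflexivity.
  - destruct x as [[a a'] Ha]. destruct y as [[b b'] Hb]. simpl in *.
    transitivity (padd (padd a (padd b (popp a))) (popp b)); [gsimpl HG; reflexivity|].
    rewrite <- (conj_same HG HH Kc b Ha). gsimpl HG.
    rewrite <- (conj_same HG HH Kc (popp a') Hb). gsimpl HG. reflexivity.
  - simpl. rewrite IHHc1, IHHc2. reflexivity.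
  - simpl. rewrite IHHc. reflexivity.
Qed.

Lemma normal_L3 (G H : pgrp) (HG : is_pgrp G) (HH : is_pgrp H) (f : phom G H) :
  regular_epi f -> Kcentral f -> Hprime f -> normal_ext f.
Proof.
  intros Hf Kc Hp. split; [exact Hf|].
  assert (HPB := is_pgrp_PB HG HG f f).
  apply (triv_of HPB HG).
  - split.
    + intros y. exists (exist (fun q : G * G => f (fst q) = f (snd q)) (y, y) eq_refl : PB f f). reflexivity.
    + intros y Hy. exists (exist (fun q : G * G => f (fst q) = f (snd q)) (y, y) eq_refl : PB f f). split; [split; auto|reflexivity].
  - intros [[a b] h] E1 E2. simpl in E1. subst a.
    apply (eta_eq_inv HPB) in E2. apply (kp_inv HG HH Kc) in E2. simpl in E2.
    gsimplin HG E2. apply eq_sig_hprop; [intros; apply proof_irrelevance|]. simpl.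
    rewrite <- E2. reflexivity.
  - intros [[x x'] h] Hx Hab. simpl in Hx, h.
    apply (ab_pos_iff HPB) in Hab. destruct Hab as [[[p1 p2] hp] [[[r1 r2] hr] [[Hp1 Hp2] [[Hr1 Hr2] E]]]]. unfold pb_pos in *.
    simpl in hp, hr, Hp1, Hp2, Hr1, Hr2.
    apply (eta_eq_inv HPB) in E. apply (kp_inv HG HH Kc) in E. simpl in E.
    gsimplin HG E.
    split; [exact Hx|]. simpl.
    assert (E' : padd (padd x (padd r1 (popp p1))) (padd p2 (popp r2)) =
                 padd (padd x' (padd r2 (popp p2))) (padd p2 (popp r2))) by (rewrite E; reflexivity).
    gsimplin HG E'.
    assert (Hm : forall h, padd (padd (popp p1) p2) h = padd h (padd (popp p1) p2)).
    { apply Kc. rewrite hom_add, hom_opp, hp. apply HH. }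
    assert (Pm : ppos (padd (popp p1) p2)) by (apply Hp; auto).
    assert (Hn : forall h, padd (padd r1 (popp r2)) h = padd h (padd r1 (popp r2))).
    { apply Kc. rewrite hom_add, hom_opp, hr. apply HH. }
    assert (Pn : ppos (padd r1 (popp r2))).
    { assert (P0 : ppos (padd (popp r2) r1)) by (apply Hp; auto).
      replace (padd (popp r2) r1) with (padd (popp r2) (padd (padd r1 (popp r2)) r2)) in P0
        by (gsimpl HG; reflexivity).
      rewrite (Hn r2) in P0. gsimplin HG P0. exact P0. }
    rewrite <- E'.
    replace (padd r1 (padd (popp p1) (padd p2 (popp r2)))) with
      (padd (padd r1 (padd (popp p1) p2)) (popp r2)) by (gsimpl HG; reflexivity).
    rewrite <- (Hm r1). gsimpl HG.
    apply (ax_posD HG); [exact Hx|].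
    replace (padd (popp p1) (padd p2 (padd r1 (popp r2)))) with
      (padd (padd (popp p1) p2) (padd r1 (popp r2))) by (gsimpl HG; reflexivity).
    apply (ax_posD HG); auto.
Qed.

Lemma eqm_ext (G H : pgrp) (HG : is_pgrp G) (HH : is_pgrp H) (f : phom G H)
  (q q' : EqM (cone_hom HG HH f)) :
  proj1_sig (fst (proj1_sig q)) = proj1_sig (fst (proj1_sig q')) ->
  proj1_sig (snd (proj1_sig q)) = proj1_sig (snd (proj1_sig q')) -> q = q'.
Proof.
  destruct q as [[[a1 h1] [a2 h2]] h]. destruct q' as [[[b1 k1] [b2 k2]] k]. simpl.
  intros E1 E2. subst b1 b2.
  apply eq_sig_hprop; [intros; apply proof_irrelevance|]. simpl.
  f_equal; apply eq_sig_hprop; try (intros; apply proof_irrelevance); reflexivity.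
Qed.

Lemma L1 (G H : pgrp) (HG : is_pgrp G) (HH : is_pgrp H) (f : phom G H) :
  special_homogeneous_surjection (cone_hom HG HH f) -> Hprime f.
Proof.
  intros [_ [_ Hhom]] a a' Ha Ha' Eff.
  set (ya := exist (fun x : G => ppos x) a Ha : cone HG).
  set (ya' := exist (fun x : G => ppos x) a' Ha' : cone HG).
  assert (hb : cone_hom HG HH f ya = cone_hom HG HH f ya')
    by (apply eq_sig_hprop; [intros; apply proof_irrelevance|]; simpl; exact Eff).
  set (b := exist (fun q : cone HG * cone HG => cone_hom HG HH f (fst q) = cone_hom HG HH f (snd q))
              (ya, ya') hb : EqM (cone_hom HG HH f)).
  destruct (Hhom ya) as [_ [_ [_ Sur]]]. destruct (Sur b eq_refl) as [x [Ax Ex]].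
  destruct x as [[x1 [x2 hx2]] hx].
  apply (f_equal (fun q : EqM (cone_hom HG HH f) => proj1_sig (snd (proj1_sig q)))) in Ex.
  simpl in Ex. rewrite <- Ex. gsimpl HG. exact hx2.
Qed.

Lemma L2 (G H : pgrp) (HG : is_pgrp G) (HH : is_pgrp H) (f : phom G H) :
  regular_epi f -> Kcentral f -> Hprime f -> special_homogeneous_surjection (cone_hom HG HH f).
Proof.
  intros Hf Kc Hp. split.
  { intros [y Hy]. destruct (proj2 Hf y Hy) as [x [Hx Ex]]. exists (exist _ x Hx).
    apply eq_sig_hprop; [intros; apply proof_irrelevance|]. simpl. exact Ex. }
  split; [intros; reflexivity|].
  intros [a Ha]. split; split.
  - intros [[[x1 h1] [x2 h2]] hx] Ax. simpl in *.
    apply eq_sig_hprop; [intros; apply proof_irrelevance|]. simpl.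
    apply (f_equal (@proj1_sig _ _)) in Ax. simpl in Ax. subst x1. gsimpl HG. reflexivity.
  - split.
    + intros [[[x1 h1] [x2 h2]] hx] [[[y1 k1] [y2 k2]] hy] Ax Ax' E. apply eqm_ext; simpl.
      * apply (f_equal (@proj1_sig _ _)) in Ax, Ax'. simpl in Ax, Ax'. rewrite Ax, Ax'. reflexivity.
      * apply (f_equal (fun q : EqM (cone_hom HG HH f) => proj1_sig (snd (proj1_sig q)))) in E.
        simpl in E. apply (g_cancel_r HG) in E. exact E.
    + intros [[[b1 k1] [b2 k2]] hb] Bb. simpl in Bb.
      apply (f_equal (@proj1_sig _ _)) in Bb. simpl in Bb. subst b1.
      assert (hb' := f_equal (@proj1_sig _ _) hb). simpl in hb'.
      assert (Hn : forall h, padd (padd (popp a) b2) h = padd h (padd (popp a) b2)).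
      { apply Kc. rewrite hom_add, hom_opp, hb'. apply HH. }
      assert (Pn : ppos (padd b2 (popp a))).
      { replace (padd b2 (popp a)) with (padd (padd a (padd (popp a) b2)) (popp a)) by (gsimpl HG; reflexivity).
        rewrite <- (Hn a). gsimpl HG. apply Hp; auto. }
      assert (hx : cone_hom HG HH f (exist _ pzero (ax_pos0 HG)) = cone_hom HG HH f (exist _ _ Pn)).
      { apply eq_sig_hprop; [intros; apply proof_irrelevance|]. simpl.
        rewrite hom_zero, hom_add, hom_opp, hb'. symmetry; apply HH. }
      exists (exist (fun q : cone HG * cone HG => cone_hom HG HH f (fst q) = cone_hom HG HH f (snd q))
              (exist _ pzero (ax_pos0 HG), exist _ _ Pn) hx). split.
      * reflexivity.
      * apply eqm_ext; simpl; gsimpl HG; reflexivity.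
  - intros [[[x1 h1] [x2 h2]] hx] Ax. simpl in *.
    apply eq_sig_hprop; [intros; apply proof_irrelevance|]. simpl.
    apply (f_equal (@proj1_sig _ _)) in Ax. simpl in Ax. subst x1. gsimpl HG. reflexivity.
  - split.
    + intros [[[x1 h1] [x2 h2]] hx] [[[y1 k1] [y2 k2]] hy] Ax Ax' E. apply eqm_ext; simpl.
      * apply (f_equal (@proj1_sig _ _)) in Ax, Ax'. simpl in Ax, Ax'. rewrite Ax, Ax'. reflexivity.
      * apply (f_equal (fun q : EqM (cone_hom HG HH f) => proj1_sig (snd (proj1_sig q)))) in E.
        simpl in E. apply (g_cancel_l HG) in E. exact E.
    + intros [[[b1 k1] [b2 k2]] hb] Bb. simpl in Bb.
      apply (f_equal (@proj1_sig _ _)) in Bb. simpl in Bb. subst b1.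
      assert (hb' := f_equal (@proj1_sig _ _) hb). simpl in hb'.
      assert (Pn : ppos (padd (popp a) b2)) by (apply Hp; auto).
      assert (hx : cone_hom HG HH f (exist _ pzero (ax_pos0 HG)) = cone_hom HG HH f (exist _ _ Pn)).
      { apply eq_sig_hprop; [intros; apply proof_irrelevance|]. simpl.
        rewrite hom_zero, hom_add, hom_opp, hb'. symmetry; apply HH. }
      exists (exist (fun q : cone HG * cone HG => cone_hom HG HH f (fst q) = cone_hom HG HH f (snd q))
              (exist _ pzero (ax_pos0 HG), exist _ _ Pn) hx). split.
      * reflexivity.
      * apply eqm_ext; simpl; gsimpl HG; reflexivity.
Qed.

Theorem theorem6p3 (G H : pgrp) (HG : is_pgrp G) (HH : is_pgrp H)
  (f : phom G H) (Hf : regular_epi f) :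
  ((forall k : G, f k = pzero -> forall g : G, padd k g = padd g k) /\
   special_homogeneous_surjection (cone_hom HG HH f)
   <-> normal_ext f) /\
  (normal_ext f <-> central_ext f).
Proof.
  assert (NC : normal_ext f -> central_ext f).
  { intros [Hf' Ht]. split; [exact Hf'|]. exists G, f. split; [exact HG|]. split; [exact Hf|]. exact Ht. }
  assert (CN : central_ext f -> normal_ext f).
  { intros C. destruct (central_L4 HG HH C) as [Kc Hp]. apply (normal_L3 HG HH Hf Kc Hp). }
  split; [|split; assumption].
  split.
  - intros [Kc S]. apply (normal_L3 HG HH Hf Kc (L1 S)).
  - intros N. destruct (central_L4 HG HH (NC N)) as [Kc Hp]. split; [exact Kc|].
    apply (L2 HG HH Hf Kc Hp).
Qed.
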